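(* Let $p(y),q(y)\in\mathbb{C}[y]$ be coprime polynomials such that $p/q$ is nonconstant and $\deg q\le\deg p$. Let $x_1,\dots,x_n$ be distinct points of the Riemann sphere with homogeneous coordinates $[\alpha_i:\beta_i]$ ($x_i=\alpha_i/\beta_i$), and suppose that for each $i$ there is a polynomial $\tilde p_i(y)$ with $$\beta_i\,p(y)-\alpha_i\,q(y)=\tilde p_i(y)^2.$$ Then: (1) if $n=1$ and $x_1=0$, then $x=p/q=P^2/q$ for some polynomial $P$; (2) if $n=2$ and $\{x_1,x_2\}=\{0,\infty\}$, then $x=p/q=P^2/Q^2$ for some polynomials $P,Q$; (3) if $n=3$ and $\{x_1,x_2,x_3\}=\{0,\infty,1\}$, then $x=p/q=\left(\frac{P^2+Q^2}{2PQ}\right)^2$ for some polynomials $P,Q$; (4) if $n\ge 4$, no such $p,q$ exist.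
   Context: The condition expresses that the change of variable $x=p(y)/q(y)$ has every preimage of each point $x_i$ of even multiplicity (used to make half-integer eigenvalues of matrix residues at the points $x_i$ integer after the change of variable). *)

(* Defs.v *)
From HB Require Import structures.
From mathcomp Require Import all_boot all_order all_algebra.
Set Implicit Arguments. Unset Strict Implicit. Unset Printing Implicit Defensive.
Import Order.TTheory GRing.Theory Num.Theory.
Local Open Scope ring_scope.

Definition ratf (C : idomainType) (p q : {poly C}) : {fraction {poly C}} :=
  FracField.tofrac p / FracField.tofrac q.

Definition polyF (C : idomainType) (p : {poly C}) : {fraction {poly C}} :=
  FracField.tofrac p.

(* Points of the Riemann sphere P^1(C) in homogeneous coordinates [a : b]
   (meaning x = a/b); two nonzero pairs denote the same point iff
   a * d = b * c. *)
Definition proj_eq (C : ringType) (x y : C * C) : bool := x.1 * y.2 == x.2 * y.1.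

Definition pt0 (C : ringType) : C * C := (0, 1).
Definition ptInf (C : ringType) : C * C := (1, 0).
Definition pt1 (C : ringType) : C * C := (1, 1).

Definition pts_set_eq (C : ringType) (n : nat) (a b : 'I_n -> C) (S : seq (C * C)) : Prop :=
  (forall i, exists2 s, s \in S & proj_eq (a i, b i) s) /\
  (forall s, s \in S -> exists i, proj_eq (a i, b i) s).

(* Main.v *)
Require Import Defs.
From HB Require Import structures.
From mathcomp Require Import all_boot all_order all_algebra.
From mathcomp Require Import ring zify.
Import Order.TTheory GRing.Theory Num.Theory.
Local Open Scope ring_scope.

Section Helpers.
Variable C : numClosedFieldType.
Implicit Types p q : {poly C}.

Lemma dvdpCmul0 (c : C) (d x : {poly C}) : c != 0 -> d %| c%:P * x -> d %| x.
Proof.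
move=> c0 h; have -> : x = c^-1%:P * (c%:P * x).
  by rewrite mulrA -polyCM mulVf // mul1r.
exact: dvdp_mull.
Qed.

Lemma sq_scale (b : C) (p t : {poly C}) :
  b != 0 -> b%:P * p = t ^+ 2 -> exists P, p = P ^+ 2.
Proof.
move=> b0 h; exists ((sqrtC b^-1)%:P * t).
by rewrite exprMn -polyC_exp sqrtCK -h mulrA -polyCM mulVf // mul1r.
Qed.

Lemma deriv0_const p : p^`() = 0 -> p = (p`_0)%:P.
Proof.
move=> h; apply/polyP=> i; rewrite coefC; case: i => [|i] //=.
have := congr1 (fun r : {poly C} => r`_i) h.
rewrite coef_deriv coef0 => /eqP; rewrite mulrn_eq0 /= => /eqP //.
Qed.

Lemma W_neq0 p q : coprimep p q -> q != 0 ->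
  ~ (exists c : C, ratf p q = polyF c%:P) -> p * q^`() - p^`() * q != 0.
Proof.
move=> cpq q0 nc; apply/negP=> /eqP hW; apply: nc.
have e : p * q^`() = p^`() * q by apply/eqP; rewrite -subr_eq0 hW.
have dq : q^`() = 0.
  have : q %| q^`().
    by rewrite -(Gauss_dvdpr _ (q:=p)) ?(coprimep_sym q p) // e dvdp_mull.
  apply: contraTeq => nz; apply/negP => /(dvdp_leq nz); by rewrite leqNgt lt_size_deriv.
have [->|p0] := eqVneq p 0.
  by exists 0; rewrite /ratf /polyF tofrac0 mul0r.
have dp : p^`() = 0.
  have : p %| p^`().
    by rewrite -(Gauss_dvdpl _ cpq) -e dvdp_mulr.
  apply: contraTeq => nz; apply/negP => /(dvdp_leq nz); by rewrite leqNgt lt_size_deriv.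
rewrite (deriv0_const _ dp) (deriv0_const _ dq) in q0 *.
have c20 : q`_0 != 0 by rewrite -polyC_eq0.
exists (p`_0 / q`_0); rewrite /ratf /polyF.
have -> : (p`_0)%:P = (p`_0 / q`_0)%:P * (q`_0)%:P by rewrite -polyCM divfK.
by rewrite tofracM mulfK // tofrac_eq0.
Qed.

Lemma sq_factor (A B Q : {poly C}) :
  A * B = Q ^+ 2 -> coprimep A B -> exists U, A = U ^+ 2.
Proof.
have [n] := ubnP (size A); elim: n A B Q => // n IH A B Q szA e cAB.
have [s1|s2] := leqP (size A) 1.
  by exists (sqrtC (A`_0))%:P; rewrite -polyC_exp sqrtCK -size1_polyC.
have : size A != 1 by rewrite neq_ltn s2 orbT.
case/closed_rootP => z rz.
have A0 : A != 0 by rewrite -size_poly_gt0 (ltn_trans _ s2).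
set X := 'X - z%:P.
have X0 : X != 0 by rewrite polyXsubC_eq0.
have [A1 eA] := factor_theorem _ _ rz.
have Bz : B.[z] != 0 := coprimep_root cAB rz.
have rQ : root Q z.
  rewrite -(root_exp (n:=2) (mulrC _ _)) //.
  by rewrite -e rootM rz.
have [Q1 eQ] := factor_theorem _ _ rQ.
have e1 : A1 * B = Q1 ^+ 2 * X.
  apply: (mulIf X0); rewrite -mulrA (mulrC B) mulrA -eA e eQ /X; ring.
have rA1 : root A1 z.
  have : root (A1 * B) z by rewrite e1 rootM /X root_XsubC eqxx orbT.
  by rewrite rootM /root (negbTE Bz) orbF.
have [A2 eA1] := factor_theorem _ _ rA1.
have e2 : A2 * B = Q1 ^+ 2.
  apply: (mulIf X0); rewrite -e1 eA1 /X; ring.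
have A20 : A2 != 0 by apply: contraNneq A0 => h; rewrite eA eA1 h !mul0r.
have c2 : coprimep A2 B.
  by move: cAB; rewrite eA eA1 !coprimepMl => /andP[/andP[]].
have sz2 : (size A2 < n)%N.
  move: szA; rewrite eA eA1 size_mul // ?mulf_neq0 // size_mul // /X size_XsubC.
  rewrite !addn2 /=. move=> H; rewrite ltnS in H; exact: ltnW H.
have [U eU] := IH A2 B Q1 sz2 e2 c2.
by exists (U * X); rewrite eA eA1 eU /X; ring.
Qed.

End Helpers.
Arguments W_neq0 {C p q}.
Arguments sq_scale {C b p t}.
Arguments sq_factor {C A B Q}.


Lemma arith1 (A B D x y x1 y1 : nat) : (A <= maxn B D)%N -> (B <= (x + y1).-1)%N ->
  (D <= (x1 + y).-1)%N -> (x1 < x)%N -> (y1 < y)%N -> (0 < x)%N -> (0 < y)%N -> (A + 2 <= x + y)%N.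
Proof. lia. Qed.
Lemma arith2 (s1 s2 s3 s4 w : nat) : (0 < s1)%N -> (0 < s2)%N -> (0 < s3)%N -> (0 < s4)%N ->
  ((s1 + (s2 + (s3 + s4).-1).-1).-1 <= w)%N -> (w + 2 <= (s1+s1).-1 + (s2+s2).-1)%N ->
  (w + 2 <= (s3+s3).-1 + (s4+s4).-1)%N -> False.
Proof. lia. Qed.

Lemma dvdpCmul {C : numClosedFieldType} {c : C} {d x : {poly C}} : c != 0 -> d %| c%:P * x -> d %| x.
Proof.
move=> c0 h; have -> : x = c^-1%:P * (c%:P * x).
  by rewrite mulrA -polyCM mulVf // mul1r.
exact: dvdp_mull.
Qed.

Lemma no4 (C : numClosedFieldType) (n : nat) (a b : 'I_n -> C) (p q : {poly C})
  (i1 i2 i3 i4 : 'I_n) :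
  coprimep p q -> p * q^`() - p^`() * q != 0 ->
  (forall i j, i != j -> ~~ proj_eq (a i, b i) (a j, b j)) ->
  (forall i, exists pt : {poly C}, (b i)%:P * p - (a i)%:P * q = pt ^+ 2) ->
  i1 != i2 -> i1 != i3 -> i1 != i4 -> i2 != i3 -> i2 != i4 -> i3 != i4 -> False.
Proof.
set W := p * q^`() - p^`() * q.
move=> cpq W0 dist sq d12 d13 d14 d23 d24 d34.
pose f i := (b i)%:P * p - (a i)%:P * q.
pose c i j := a i * b j - b i * a j.
have hWij i j : f i * (f j)^`() - (f i)^`() * f j = (c i j)%:P * W.
  by rewrite /f /W /c !derivB !derivM !derivC polyCB !polyCM; ring.
have hc i j : i != j -> c i j != 0.
  by move=> /dist; rewrite /proj_eq /= /c subr_eq0.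
have fnz i j : i != j -> f i != 0.
  move=> ij; apply/negP => /eqP fi0; have := hWij i j.
  rewrite fi0 mul0r deriv0 mul0r subr0 => /esym/eqP.
  by rewrite mulf_eq0 polyC_eq0 (negbTE (hc _ _ ij)) (negbTE W0).
have dvdW i j g : i != j -> f i = g ^+ 2 -> g %| W.
  move=> ij fg; apply: (dvdpCmul (hc _ _ ij)); rewrite -hWij fg expr2.
  apply: dvdp_sub; first by apply: dvdp_mulr; apply: dvdp_mulr; exact: dvdpp.
  apply: dvdp_mulr; rewrite derivM.
  by apply: dvdp_add; [apply: dvdp_mull | apply: dvdp_mulr]; exact: dvdpp.
have gnz i j g : i != j -> f i = g ^+ 2 -> g != 0.
  by move=> ij fg; apply: contraNneq (fnz _ _ ij) => g0; rewrite fg g0 expr0n.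
have szW i j : i != j -> (size W + 2 <= size (f i) + size (f j))%N.
  move=> ij.
  have fi0 := fnz _ _ ij.
  have fj0 : f j != 0 by apply: (fnz j i); rewrite eq_sym.
  have -> : size W = size ((c i j)%:P * W) by rewrite size_Cmul // hc.
  rewrite -hWij.
  have h1 := size_polyD (f i * (f j)^`()) (- ((f i)^`() * f j)).
  rewrite size_polyN in h1.
  have h2 := size_polyMleq (f i) (f j)^`().
  have h3 := size_polyMleq (f i)^`() (f j).
  have h4 := lt_size_deriv fi0.
  have h5 := lt_size_deriv fj0.
  have h6 : (0 < size (f i))%N by rewrite size_poly_gt0.
  have h7 : (0 < size (f j))%N by rewrite size_poly_gt0.
  exact: (arith1 _ _ _ _ _ _ _ h1 h2 h3 h4 h5 h6 h7).
have cop i j g h : i != j -> f i = g ^+ 2 -> f j = h ^+ 2 -> coprimep g h.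
  move=> ij fg fh; apply/coprimepP => d dg dh.
  have di : d %| f i by rewrite fg expr2; apply: dvdp_mulr.
  have dj : d %| f j by rewrite fh expr2; apply: dvdp_mulr.
  have ep : (c i j)%:P * p = (a i)%:P * f j - (a j)%:P * f i.
    by rewrite /f /c polyCB !polyCM; ring.
  have eq : (c i j)%:P * q = (b i)%:P * f j - (b j)%:P * f i.
    by rewrite /f /c polyCB !polyCM; ring.
  have dp : d %| p.
    by apply: (dvdpCmul (hc _ _ ij)); rewrite ep dvdp_sub // dvdp_mull.
  have dq : d %| q.
    by apply: (dvdpCmul (hc _ _ ij)); rewrite eq dvdp_sub // dvdp_mull.
  by move/coprimepP: cpq; apply.
have [g1 e1] := sq i1; have [g2 e2] := sq i2.
have [g3 e3] := sq i3; have [g4 e4] := sq i4.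
rewrite -/(f i1) in e1; rewrite -/(f i2) in e2.
rewrite -/(f i3) in e3; rewrite -/(f i4) in e4.
have n1 := gnz _ _ _ d12 e1.
have n2 := gnz _ _ _ d23 e2.
have n3 := gnz _ _ _ d34 e3.
have n4 : g4 != 0 by apply: (gnz i4 i1); rewrite // eq_sym.
have D : g1 * (g2 * (g3 * g4)) %| W.
  rewrite Gauss_dvdp ?coprimepMr ?(cop _ _ _ _ d12 e1 e2) ?(cop _ _ _ _ d13 e1 e3)
     ?(cop _ _ _ _ d14 e1 e4) ?(dvdW _ _ _ d12 e1) //=.
  rewrite Gauss_dvdp ?coprimepMr ?(cop _ _ _ _ d23 e2 e3)
     ?(cop _ _ _ _ d24 e2 e4) ?(dvdW _ _ _ d23 e2) //=.
  rewrite Gauss_dvdp ?(cop _ _ _ _ d34 e3 e4) ?(dvdW _ _ _ d34 e3) //=.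
  by apply: (dvdW i4 i1); rewrite // eq_sym.
have L := dvdp_leq W0 D.
rewrite !size_mul ?mulf_neq0 // in L.
have S12 := szW _ _ d12; have S34 := szW _ _ d34.
rewrite e1 e2 e3 e4 !expr2 !size_mul // in S12 S34.
have z1 : (0 < size g1)%N by rewrite size_poly_gt0.
have z2 : (0 < size g2)%N by rewrite size_poly_gt0.
have z3 : (0 < size g3)%N by rewrite size_poly_gt0.
have z4 : (0 < size g4)%N by rewrite size_poly_gt0.
exact: (arith2 _ _ _ _ _ z1 z2 z3 z4 L S12 S34).
Qed.

Lemma keyF (F : fieldType) (x u v : F) : 2%:R != 0 :> F ->
  x * x / (u * u * (v * v)) = (2%:R * x / (2%:R * u * v)) ^+ 2.
Proof.
move=> t0.
have -> : 2%:R * x / (2%:R * u * v) = x / (u * v) by rewrite -(mulrA 2%:R u v) -mulf_div divff // mul1r.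
by rewrite expr_div_n !expr2 mulrACA.
Qed.

Theorem mainTheorem5 (C : numClosedFieldType) (p q : {poly C}) (n : nat)
    (a b : 'I_n -> C) :
  coprimep p q -> q != 0 ->
  ~ (exists c : C, ratf p q = polyF c%:P) ->
  (size q <= size p)%N ->
  (forall i, (a i != 0) || (b i != 0)) ->
  (forall i j, i != j -> ~~ proj_eq (a i, b i) (a j, b j)) ->
  (forall i, exists pt : {poly C}, (b i)%:P * p - (a i)%:P * q = pt ^+ 2) ->
  [/\ (n = 1%N -> pts_set_eq a b [:: pt0 C] ->
        exists P : {poly C}, ratf p q = ratf (P ^+ 2) q),
      (n = 2%N -> pts_set_eq a b [:: pt0 C; ptInf C] ->
        exists P Q : {poly C}, ratf p q = ratf (P ^+ 2) (Q ^+ 2)),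
      (n = 3%N -> pts_set_eq a b [:: pt0 C; ptInf C; pt1 C] ->
        exists P Q : {poly C},
          ratf p q = (ratf (P ^+ 2 + Q ^+ 2) (2%:R * P * Q)) ^+ 2)
    & ~ (4 <= n)%N].
Proof.
move=> cpq q0 nc szq nz dist sq.
have W0 := W_neq0 cpq q0 nc.
have get0 S : pts_set_eq a b S -> pt0 C \in S -> exists P, p = P ^+ 2.
  move=> [_ h] /h [i]; rewrite /proj_eq /= mulr1 mulr0 => /eqP ai0.
  have [t ht] := sq i; rewrite ai0 polyC0 mul0r subr0 in ht.
  by apply: (sq_scale _ ht); move: (nz i); rewrite ai0 eqxx.
have getI S : pts_set_eq a b S -> ptInf C \in S -> exists Q, q = Q ^+ 2.
  move=> [_ h] /h [i]; rewrite /proj_eq /= mulr1 mulr0 => /eqP bi0.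
  have [t ht] := sq i; rewrite -bi0 polyC0 mul0r sub0r -mulNr -polyCN in ht.
  by apply: (sq_scale _ ht); move: (nz i); rewrite -bi0 eqxx orbF oppr_eq0.
have get1 S : pts_set_eq a b S -> pt1 C \in S -> exists R, p - q = R ^+ 2.
  move=> [_ h] /h [i]; rewrite /proj_eq /= !mulr1 => /eqP ab.
  have [t ht] := sq i; rewrite ab -mulrBr in ht.
  by apply: (sq_scale _ ht); move: (nz i); rewrite ab orbb.
split.
- move=> _ H; have [P eP] := get0 _ H (mem_head _ _).
  by exists P; rewrite eP.
- move=> _ H; have [P eP] := get0 _ H (mem_head _ _).
  have [Q eQ] : exists Q, q = Q ^+ 2 by apply: (getI _ H); rewrite !inE eqxx orbT.
  by exists P, Q; rewrite eP eQ.
- move=> _ H; have [P eP] := get0 _ H (mem_head _ _).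
  have [Q eQ] : exists Q, q = Q ^+ 2 by apply: (getI _ H); rewrite !inE eqxx !orbT.
  have [R eR] : exists R, p - q = R ^+ 2 by apply: (get1 _ H); rewrite !inE eqxx !orbT.
  have eAB : (P - R) * (P + R) = Q ^+ 2.
    by rewrite -eQ -[q]opprK -[- q](addKr p) eR eP; ring.
  have cAB : coprimep (P - R) (P + R).
    apply/coprimepP => d d1 d2.
    have two0 : (2%:R : C) != 0 by rewrite pnatr_eq0.
    have dP : d %| P.
      apply: (dvdpCmul two0); rewrite polyC_natr.
      have -> : 2%:R * P = (P - R) + (P + R) by ring.
      exact: dvdp_add.
    have dR : d %| R.
      apply: (dvdpCmul two0); rewrite polyC_natr.
      have -> : 2%:R * R = (P + R) - (P - R) by ring.
      exact: dvdp_sub.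
    have dp : d %| p by rewrite eP expr2 dvdp_mulr.
    have dq : d %| q.
      have -> : q = p - (p - q) by ring.
      by rewrite eR expr2 dvdp_sub // dvdp_mulr.
    by move/coprimepP: cpq; apply.
  have [U eU] := sq_factor eAB cAB.
  have eBA : (P + R) * (P - R) = Q ^+ 2 by rewrite mulrC.
  have cBA : coprimep (P + R) (P - R) by rewrite coprimep_sym.
  have [V eV] := sq_factor eBA cBA.
  exists U, V.
  have e2P : U ^+ 2 + V ^+ 2 = 2%:R * P by rewrite -eU -eV; ring.
  have eQ2 : tofrac (Q ^+ 2) = tofrac (U ^+ 2) * tofrac (V ^+ 2)
    by rewrite -tofracM -eU -eV eAB.
  rewrite /ratf eP eQ e2P ?tofracM ?tofracXn ?rmorph_nat in eQ2 *.
  have two0 : (2%:R : {fraction {poly C}}) != 0.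
    by rewrite -(rmorph_nat (@tofrac _)) tofrac_eq0 -polyC_natr polyC_eq0 pnatr_eq0.
  rewrite eQ2.
  exact: keyF.
- move=> n4.
  have h3 : (3 < n)%N := n4.
  have h2 := ltnW h3; have h1 := ltnW h2; have h0 := ltnW h1.
  by apply: (no4 _ _ _ _ _ _ (Ordinal h0) (Ordinal h1) (Ordinal h2) (Ordinal h3) cpq W0 dist sq).
Qed.
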